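(* Let $(N^\circ,M^\circ,L^\circ)\in OLag(V)^3$ be pairwise in general position, and let $r^L:M\to N$ be the linear map determined by $r^L(m)-m\in L$ for all $m\in M$, with induced map $r^L_\wedge:\bigwedge^nM\to\bigwedge^nN$. Then $$F_{N^\circ,M^\circ}\circ F_{M^\circ,L^\circ}=C\cdot F_{N^\circ,L^\circ},\qquad C=\sum_{m\in M}\psi\big(\tfrac12\omega(r^L(m),m)\big)=G_1^{\,n}\,\sigma\Big((-1)^{n(n-1)/2}\,\omega_\wedge\big(r^L_\wedge(o_M),o_M\big)\Big).$$
   Context: Let $p$ be an odd prime, $q$ a power of $p$, and $(V,\omega)$ a symplectic vector space of dimension $2n$ over $\mathbb F_q$. The Heisenberg group $H(V)$ is the set $V\times\mathbb F_q$ with multiplication $(v,z)\cdot(v',z')=(v+v',z+z'+\tfrac12\omega(v,v'))$. Fix a non-trivial character $\psi:\mathbb F_q\to\mathbb C^\times$. An oriented Lagrangian is a pair $L^\circ=(L,o_L)$ with $L\subset V$ Lagrangian and $o_L\in\bigwedge^nL$ nonzero; $OLag(V)$ is the set of these. For $L^\circ\in OLag(V)$, $\mathcal H_{L^\circ}$ is the space of functions $f:H(V)\to\mathbb C$ with $f((0,z)\cdot(l,0)\cdot h)=\psi(z)f(h)$ for all $z\in\mathbb F_q,l\in L,h\in H(V)$. Lagrangians $M,L$ are in general position if $M+L=V$. For $(M^\circ,L^\circ)$ in general position, $F_{M^\circ,L^\circ}:\mathcal H_{L^\circ}\to\mathcal H_{M^\circ}$ is $F_{M^\circ,L^\circ}[f](h)=\sum_{m\in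 M}f((m,0)\cdot h)$. For a $2k$-dimensional symplectic space $(W,\omega)$ and Lagrangians $A,B\subset W$, $\omega_\wedge:\bigwedge^kA\times\bigwedge^kB\to\mathbb F_q$ is $\omega_\wedge(a_1\wedge\dots\wedge a_k,b_1\wedge\dots\wedge b_k)=(-1)^{k(k-1)/2}\det(\omega(a_i,b_j))_{i,j}$. $\sigma$ is the Legendre character of $\mathbb F_q^\times$ and $G_1=\sum_{z\in\mathbb F_q}\psi(\tfrac12 z^2)$. *)

(* Defs.v *)
From HB Require Import structures.
From mathcomp Require Import all_boot all_order all_algebra all_field.
Set Implicit Arguments. Unset Strict Implicit. Unset Printing Implicit Defensive.
Import Order.TTheory GRing.Theory Num.Theory.
Local Open Scope ring_scope.

(* V = 'rV[F]_(n + n) (row vectors), with symplectic form given by a matrix Om: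
   omega u v = u Om v^T. *)
Definition omega (F : fieldType) (n : nat) (Om : 'M[F]_(n + n))
  (u v : 'rV[F]_(n + n)) : F := (u *m Om *m v^T) 0 0.

Definition symplectic_form (F : fieldType) (n : nat) (Om : 'M[F]_(n + n)) : Prop :=
  (forall v, omega Om v v = 0) /\ \det Om != 0.

(* An oriented Lagrangian (L, o_L) is represented by an n x 2n matrix B whose
   rows b_1..b_n form a basis of L (row space of B), with o_L = b_1 /\ ... /\ b_n.
   Every nonzero element of /\^n L is of this form. *)
Definition olag (F : fieldType) (n : nat) (Om : 'M[F]_(n + n))
  (B : 'M[F]_(n, n + n)) : Prop :=
  row_free B /\ B *m Om *m B^T = 0.

Definition gen_pos (F : fieldType) (n : nat) (A B : 'M[F]_(n, n + n)) : Prop :=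
  ((A + B)%MS == 1%:M :> 'M[F]_(n + n))%MS.

Definition hmul (F : fieldType) (n : nat) (Om : 'M[F]_(n + n))
  (x y : 'rV[F]_(n + n) * F) : 'rV[F]_(n + n) * F :=
  (x.1 + y.1, x.2 + y.2 + 2^-1 * omega Om x.1 y.1).

Definition nontrivial_char (F : fieldType) (psi : F -> algC) : Prop :=
  psi 0 = 1 /\ (forall x y, psi (x + y) = psi x * psi y) /\ (exists x, psi x != 1).

(* f in H_{L°} (depends only on the row space of L) *)
Definition inH (F : fieldType) (n : nat) (Om : 'M[F]_(n + n)) (psi : F -> algC)
  (L : 'M[F]_(n, n + n)) (f : 'rV[F]_(n + n) * F -> algC) : Prop :=
  forall (z : F) (l : 'rV[F]_(n + n)) (h : 'rV[F]_(n + n) * F),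
    (l <= L)%MS -> f (hmul Om (hmul Om (0, z) (l, 0)) h) = psi z * f h.

Definition Fop (F : finFieldType) (n : nat) (Om : 'M[F]_(n + n))
  (M : 'M[F]_(n, n + n)) (f : 'rV[F]_(n + n) * F -> algC)
  (h : 'rV[F]_(n + n) * F) : algC :=
  \sum_(m : 'rV[F]_(n + n) | (m <= M)%MS) f (hmul Om (m, 0) h).

Definition sgnk (F : fieldType) (k : nat) : F := (-1) ^+ ((k * k.-1)./2).

(* omega_wedge (a_1/\../\a_k, b_1/\../\b_k) = (-1)^(k(k-1)/2) det(omega(a_i,b_j)),
   with the a_i (resp. b_j) the rows of A (resp. B). *)
Definition omega_wedge (F : fieldType) (n k : nat) (Om : 'M[F]_(n + n))
  (A B : 'M[F]_(k, n + n)) : F :=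
  sgnk F k * \det (A *m Om *m B^T).

Definition legendre (F : finFieldType) (x : F) : algC :=
  if x == 0 then 0 else if [exists y : F, y ^+ 2 == x] then 1 else -1.

Definition G1 (F : finFieldType) (psi : F -> algC) : algC :=
  \sum_(z : F) psi (2^-1 * z ^+ 2).

(* Main.v *)
Require Import Defs.
From HB Require Import structures.
From mathcomp Require Import all_boot all_order all_algebra all_field.
Import Order.TTheory GRing.Theory Num.Theory.
Local Open Scope ring_scope.
From mathcomp Require Import perm.
Lemma quad_entry (F : fieldType) k (G : 'M[F]_k) (i l : 'I_k) : ((delta_mx 0 i : 'rV[F]_k) *m G *m (delta_mx 0 l : 'rV[F]_k)^T) 0 0 = G i l.
Proof. by rewrite -rowE trmx_delta -colE !mxE. Qed.

Lemma diag_entry (F : fieldType) k (P G : 'M[F]_k) i :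
  (P *m G *m P^T) i i = (row i P *m G *m (row i P)^T) 0 0.
Proof.
rewrite tr_row -row_mul !mxE; apply: eq_bigr => j _; rewrite !mxE.
by [].
Qed.

Lemma mxD_entry (R : nmodType) m k (A B : 'M[R]_(m, k)) i j : (A + B) i j = A i j + B i j.
Proof. by rewrite mxE. Qed.

Lemma pivot (F : fieldType) (h2 : (2:F) != 0) k (G : 'M[F]_k.+1) : G^T = G -> G \in unitmx ->
  exists2 P : 'M_k.+1, P \in unitmx & (P *m G *m P^T) 0 0 != 0.
Proof.
move=> sG uG.
case: (boolP [exists i, G i i != 0]) => [/existsP [i Gi] | /existsPn Gd].
  exists (perm_mx (tperm 0 i)); first exact: unitmx_perm.
  by rewrite tr_perm_mx -col_permE -row_permE !mxE tpermL.
have [j Gj] : exists j, G 0 j != 0.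
  apply/existsP; apply: contraT => /existsPn h.
  have e0 : (delta_mx 0 0 : 'rV[F]_k.+1) *m G = 0.
    by apply/rowP => l; rewrite -rowE !mxE; apply/eqP; move: (h l); rewrite negbK.
  have : (delta_mx 0 0 : 'rV[F]_k.+1) = 0 by rewrite -(mulmxK uG (delta_mx 0 0)) e0 mul0mx.
  by move/matrixP => /(_ 0 0); rewrite !mxE eqxx /= => /eqP; rewrite oner_eq0.
have Gjj : G j j = 0 by move: (Gd j); rewrite negbK => /eqP.
have j0 : j != 0 by apply: contraNneq Gj => ->; move: (Gd 0); rewrite negbK.
set E := delta_mx 0 j : 'M[F]_k.+1.
exists (1%:M + E).
  have : (1%:M + E) *m (1%:M - E) = 1%:M.
    by rewrite mulmxDl mul1mx mulmxBr mulmx1 /E mul_delta_mx_cond (negPf j0) mulr0n subr0 subrK.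
  by case/mulmx1_unit.
rewrite diag_entry linearD /= row1 rowE mul_delta_mx.
rewrite linearD /= !mulmxDl !mulmxDr !mxD_entry !quad_entry Gjj.
move: (Gd 0); rewrite negbK => /eqP ->.
have -> : G j 0 = G 0 j by rewrite -{1}sG mxE.
by rewrite add0r addr0 -mulr2n -mulr_natr mulf_neq0.
Qed.
Lemma block_step (F : fieldType) k (H : 'M[F]_(1 + k)) : H^T = H -> H 0 0 != 0 ->
  exists2 Q : 'M_(1 + k), Q \in unitmx &
    exists E : 'M_k, Q *m H *m Q^T = block_mx (H 0 0)%:M 0 0 E.
Proof.
move=> sH h0.
set A := ulsubmx H; set B := ursubmx H; set Cm := dlsubmx H; set E := drsubmx H.
have eA : A = (H 0 0)%:M.
  rewrite [LHS]mx11_scalar /A !mxE; congr (_%:M); congr (H _ _); exact: val_inj.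
have uA : A \in unitmx by rewrite eA unitmxE det_scalar expr1 unitfE.
have tA : A^T = A by rewrite eA tr_scalar_mx.
have tC : Cm^T = B by rewrite /Cm trmx_dlsub sH.
exists (block_mx 1%:M 0 (- (Cm *m invmx A)) 1%:M).
  by rewrite unitmxE det_lblock !det1 mulr1 unitr1.
exists (E - Cm *m invmx A *m B).
rewrite -[H in LHS]submxK -/A -/B -/Cm -/E tr_block_mx mulmx_block mulmx_block.
rewrite !trmx1 !trmx0 !mul1mx !mul0mx !mulmx1 !mulmx0 !addr0 ?add0r.
have z : - (Cm *m invmx A) *m A + Cm = 0 by rewrite mulNmx -mulmxA mulVmx // mulmx1 addNr.
have z2 : A *m (- (Cm *m invmx A))^T + B = 0.
  by rewrite linearN /= trmx_mul tC trmx_inv tA mulmxN mulmxA mulmxV // mul1mx addNr.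
rewrite z z2 mul0mx add0r -eA mulNmx.
by rewrite addrC.
Qed.
Lemma sum_rV_split (R : nmodType) (F : finFieldType) m k (f : 'rV[F]_(m + k) -> R) :
  \sum_(x : 'rV[F]_(m + k)) f x =
  \sum_(u : 'rV[F]_m) \sum_(w : 'rV[F]_k) f (row_mx u w).
Proof.
rewrite pair_big /=.
rewrite (reindex (fun p : 'rV[F]_m * 'rV[F]_k => row_mx p.1 p.2)) //=.
exists (fun x => (lsubmx x, rsubmx x)) => [[u w] _ | x _] /=.
  by rewrite row_mxKl row_mxKr.
by rewrite hsubmxK.
Qed.

Lemma sum_rV1 (R : nmodType) (F : finFieldType) (f : 'rV[F]_1 -> R) :
  \sum_(x : 'rV[F]_1) f x = \sum_(t : F) f (const_mx t).
Proof.
rewrite (reindex (fun t : F => (const_mx t : 'rV[F]_1))) //=.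
exists (fun x : 'rV[F]_1 => x 0 0) => [t _ | x _] /=; first by rewrite mxE.
by apply/matrixP => i j; rewrite !mxE !ord1.
Qed.
Section Sq.
Variable F : finFieldType.
Hypothesis h2 : (2:F) != 0.

Definition sqb (x : F) := [exists y : F, y ^+ 2 == x].
Definition cnt (u : F) := #|[set t : F | t ^+ 2 == u]|.

Lemma neq_opp (s : F) : s != 0 -> s != - s.
Proof.
move=> s0; apply/negP => /eqP e.
have : s *+ 2 = 0 by rewrite mulr2n {1}e addNr.
rewrite -mulr_natr => /eqP; by rewrite mulf_eq0 (negPf s0) (negPf h2).
Qed.

Lemma cnt0 : cnt 0 = 1%N.
Proof.
rewrite /cnt (_ : [set t | t ^+ 2 == 0] = [set 0]) ?cards1 //.
by apply/setP => t; rewrite !inE sqrf_eq0.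
Qed.

Lemma cnt_sq s : s != 0 -> cnt (s ^+ 2) = 2%N.
Proof.
move=> s0; rewrite /cnt (_ : [set t | t ^+ 2 == s ^+ 2] = [set s; - s]).
  by rewrite cards2 neq_opp.
by apply/setP => t; rewrite !inE eqf_sqr.
Qed.

Lemma cnt_nsq u : ~~ sqb u -> cnt u = 0%N.
Proof.
move=> nu; apply/eqP; rewrite /cnt cards_eq0; apply/eqP/setP => t.
rewrite !inE; apply/negP => e; case/negP: nu; apply/existsP; by exists t.
Qed.

Lemma sum_sq (g : F -> algC) :
  \sum_(t : F) g (t ^+ 2) = \sum_(u : F) g u *+ cnt u.
Proof.
rewrite (partition_big (fun t : F => t ^+ 2) predT) //=.
apply: eq_bigr => u _.
rewrite (eq_bigl (mem [set t : F | t ^+ 2 == u])); last by move=> t; rewrite !inE.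
rewrite (eq_bigr (fun _ => g u)); last by move=> t /[!inE] /eqP ->.
by rewrite sumr_const.
Qed.

Definition Sq := [set x : F | (x != 0) && sqb x].
Definition NSq := [set x : F | (x != 0) && ~~ sqb x].

Lemma sum_cnt : (\sum_(u : F) cnt u)%N = #|F|.
Proof.
rewrite -[RHS]sum1_card [RHS](partition_big (fun t : F => t ^+ 2) predT) //=.
apply: eq_bigr => u _.
rewrite (eq_bigl (mem [set t : F | t ^+ 2 == u])); last by move=> t; rewrite !inE.
by rewrite sum1_card.
Qed.

Lemma card_F1 : #|F| = (1 + 2 * #|Sq|)%N.
Proof.
rewrite -sum_cnt (bigD1 0) //= cnt0; congr (_ + _)%N.
rewrite (eq_bigr (fun u => if sqb u then 2 else 0)%N); last first.
  move=> u u0; case: ifP => su; last by rewrite cnt_nsq ?su.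
  case/existsP: su => y /eqP yu; rewrite -yu cnt_sq //.
  by apply: contraNneq u0 => y0; rewrite -yu y0 expr0n.
rewrite -big_mkcondr /= (eq_bigl (mem Sq)); last by move=> u; rewrite !inE.
by rewrite sum_nat_const mulnC.
Qed.

Lemma card_F2 : #|F| = (1 + #|Sq| + #|NSq|)%N.
Proof.
rewrite -[LHS]sum1_card [LHS](bigD1 0) //= -addnA; congr (_ + _)%N.
rewrite (bigID sqb) /=; congr (_ + _)%N.
  by rewrite (eq_bigl (mem Sq)) ?sum1_card // => u; rewrite !inE.
by rewrite (eq_bigl (mem NSq)) ?sum1_card // => u; rewrite !inE.
Qed.

Lemma card_SqNSq : #|Sq| = #|NSq|.
Proof.
have := card_F2; rewrite card_F1 -addnA => /eqP; rewrite eqn_add2l mul2n -addnn eqn_add2l.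
by move/eqP.
Qed.

Lemma sqbM {a b : F} : sqb a -> sqb b -> sqb (a * b).
Proof.
case/existsP=> x /eqP <-; case/existsP=> y /eqP <-.
by apply/existsP; exists (x * y); rewrite exprMn.
Qed.

Lemma sqbV {a : F} : sqb a -> sqb a^-1.
Proof. by case/existsP=> x /eqP <-; apply/existsP; exists x^-1; rewrite exprVn. Qed.

Lemma sqb_div {a b : F} : b != 0 -> sqb (a * b) -> sqb b -> sqb a.
Proof.
move=> b0 sab sb; have := sqbM sab (sqbV sb).
by rewrite -mulrA divff // mulr1.
Qed.

Lemma nsq_mul {a b : F} : a \in NSq -> b \in NSq -> sqb (a * b).
Proof.
move=> aN bN; move: (aN); rewrite inE => /andP [a0 na].
pose aS := [set a * x | x in Sq].
have sub : aS \subset NSq.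
  apply/subsetP => z /imsetP [x xS ->]; move: xS; rewrite !inE => /andP [x0 sx].
  rewrite mulf_neq0 //=; apply/negP => sax; case/negP: na.
  by rewrite -[a]mulr1 -(divff x0) mulrA sqbM // sqbV.
have cE : #|aS| = #|NSq| by rewrite card_imset ?card_SqNSq //; apply: mulfI.
have := (subset_cardP cE sub) b; rewrite bN => /imsetP [x xS ->].
move: xS; rewrite inE => /andP [_ sx].
by rewrite mulrA sqbM // ; apply/existsP; exists a; rewrite expr2.
Qed.

Lemma legendreM (a b : F) : legendre (a * b) = legendre a * legendre b.
Proof.
rewrite /legendre mulf_eq0.
have [->|a0] := eqVneq a 0; first by rewrite /= mul0r.
have [->|b0] := eqVneq b 0; first by rewrite orbT mulr0.
rewrite /=; rewrite -/(sqb a) -/(sqb b) -/(sqb (a * b)).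
case sa: (sqb a); case sb: (sqb b).
- by rewrite sqbM // mulr1.
- have -> : sqb (a * b) = false.
    by apply/negbTE/negP => sab; move/negbT/negP: sb; apply; apply: (sqb_div a0 _ sa); rewrite mulrC.
  by rewrite mul1r.
- have -> : sqb (a * b) = false.
    by apply/negbTE/negP => sab; move/negbT/negP: sa; apply; apply: (sqb_div b0 sab sb).
  by rewrite mulr1.
- by rewrite nsq_mul ?inE ?a0 ?b0 ?sa ?sb // mulrNN mulr1.
Qed.

Variable psi : F -> algC.
Hypothesis psiD : forall x y, psi (x + y) = psi x * psi y.
Hypothesis psiN : exists x, psi x != 1.

Lemma sum_psi : \sum_(t : F) psi t = 0.
Proof.
case: psiN => x0 nx0.
have e : \sum_(t : F) psi t = psi x0 * \sum_(t : F) psi t.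
  by rewrite [LHS](reindex_inj (addrI x0)) mulr_sumr; apply: eq_bigr => t _; rewrite psiD.
move: e; set S := \sum_t _ => /eqP; rewrite -subr_eq0 -{1}[S]mul1r -mulrBl mulf_eq0.
by rewrite subr_eq0 eq_sym (negPf nx0) /= => /eqP.
Qed.

Lemma sum_psi_half : \sum_(t : F) psi (2^-1 * t) = 0.
Proof.
have h : (2^-1 : F) != 0 by rewrite invr_eq0.
by rewrite -[RHS]sum_psi [RHS](reindex_inj (mulfI h)).
Qed.

Definition G1' := \sum_(z : F) psi (2^-1 * z ^+ 2).

Lemma gauss_sq (c : F) : c != 0 -> \sum_(t : F) psi (2^-1 * (c ^+ 2 * t ^+ 2)) = G1'.
Proof.
move=> c0; rewrite /G1' [RHS](reindex_inj (mulfI c0)).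
by apply: eq_bigr => t _; rewrite exprMn.
Qed.

Lemma cnt_pair (a v : F) : a \in NSq -> (cnt v + cnt (a^-1 * v)%R = 2)%N.
Proof.
rewrite inE => /andP [a0 na].
have [->|v0] := eqVneq v 0; first by rewrite mulr0 cnt0.
have av0 : a^-1 * v != 0 by rewrite mulf_neq0 ?invr_eq0.
case sv: (sqb v).
  rewrite (@cnt_nsq (a^-1 * v)).
    by case/existsP: sv => y /eqP yv; rewrite -yv cnt_sq //; apply: contraNneq v0 => y0; rewrite -yv y0 expr0n.
  apply/negP => s; case/negP: na; rewrite -[a]invrK; apply: sqbV.
  by apply: (sqb_div v0 s sv).
rewrite cnt_nsq ?sv //.
have s : sqb (a^-1 * v).
  apply: nsq_mul; rewrite inE ?sv ?v0 ?invr_eq0 ?a0 //=.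
  by apply/negP => s; case/negP: na; rewrite -[a]invrK; apply: sqbV.
by case/existsP: s => y /eqP yv; rewrite -yv cnt_sq //; apply: contraNneq av0 => y0; rewrite -yv y0 expr0n.
Qed.

Lemma gauss_nsq (a : F) : a \in NSq -> \sum_(t : F) psi (2^-1 * (a * t ^+ 2)) = - G1'.
Proof.
move=> aN; move: (aN); rewrite inE => /andP [a0 _].
apply/eqP; rewrite -addr_eq0 /G1'.
rewrite (sum_sq (fun u => psi (2^-1 * (a * u)))) (sum_sq (fun u => psi (2^-1 * u))).
rewrite (reindex_inj (mulfI (_ : a^-1 != 0))) ?invr_eq0 //=.
rewrite -big_split /=.
rewrite (eq_bigr (fun v => psi (2^-1 * v) *+ 2)).
  by rewrite ?sumrMnl sum_psi_half mul0rn.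
move=> v _; by rewrite (mulrA a) mulfV // mul1r -mulrnDr addnC cnt_pair.
Qed.

Lemma gauss1 (a : F) : a != 0 -> \sum_(t : F) psi (2^-1 * (a * t ^+ 2)) = legendre a * G1'.
Proof.
move=> a0; rewrite /legendre (negPf a0) -/(sqb a).
case sa: (sqb a).
  case/existsP: sa => c /eqP ca; rewrite -ca in a0 *; rewrite gauss_sq ?mul1r //; apply: contraNneq a0 => ->; by rewrite expr0n.
by rewrite gauss_nsq ?mulN1r // inE a0 sa.
Qed.

Hypothesis psi0 : psi 0 = 1.

Definition QS {k} (G : 'M[F]_k) := \sum_(x : 'rV[F]_k) psi (2^-1 * (x *m G *m x^T) 0 0).

Lemma QS_cong k (P G : 'M[F]_k) : P \in unitmx -> QS (P *m G *m P^T) = QS G.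
Proof.
move=> Pu; rewrite /QS [RHS](reindex_inj (can_inj (mulmxK Pu))) /=.
by apply: eq_bigr => x _; rewrite trmx_mul !mulmxA.
Qed.

Lemma legendre_sq (c : F) : c != 0 -> legendre (c ^+ 2) = 1.
Proof.
move=> c0; rewrite /legendre expf_eq0 (negPf c0) andbF.
by rewrite (_ : [exists y, y ^+ 2 == c ^+ 2] = true) //; apply/existsP; exists c.
Qed.

Lemma leg_cong k (P G : 'M[F]_k) : P \in unitmx ->
  legendre (\det (P *m G *m P^T)) = legendre (\det G).
Proof.
move=> Pu; rewrite !det_mulmx det_tr mulrC mulrA -expr2 legendreM legendre_sq ?mul1r //.
by move: Pu; rewrite unitmxE unitfE.
Qed.

Lemma QS_main k : forall G : 'M[F]_k, G^T = G -> G \in unitmx ->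
  QS G = G1' ^+ k * legendre (\det G).
Proof.
elim: k => [|k IH] G sG uG.
  rewrite /QS (eq_bigr (fun _ => 1)) => [|x _]; last by rewrite !mxE big_ord0 mulr0 psi0.
  rewrite sumr_const card_mx muln0 expn0 det_mx00 expr0 mul1r /legendre oner_eq0.
  by rewrite (_ : [exists y, y ^+ 2 == 1] = true) //; apply/existsP; exists 1; rewrite expr1n.
have [P uP hP] := @pivot _ h2 _ _ sG uG.
set H := P *m G *m P^T.
have sH : H^T = H by rewrite /H !trmx_mul trmxK sG mulmxA.
have uH : H \in unitmx by rewrite /H !unitmx_mul uP uG unitmx_tr uP.
have [Q uQ [E eD]] := @block_step F k H sH hP.
rewrite -(QS_cong _ _ _ uP) -(leg_cong _ _ _ uP) -/H -(QS_cong _ _ _ uQ) -(leg_cong _ _ _ uQ) eD.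
have sD : (Q *m H *m Q^T)^T = Q *m H *m Q^T by rewrite trmx_mul (trmx_mul Q H) trmxK sH mulmxA.
have sE : E^T = E.
  by move: sD; rewrite eD tr_block_mx => /(congr1 drsubmx); rewrite !block_mxKdr.
have uD : Q *m H *m Q^T \in unitmx by rewrite unitmx_mul (unitmx_mul Q H) uQ uH unitmx_tr uQ.
have uE : E \in unitmx.
  by move: uD; rewrite eD !unitmxE det_ublock det_scalar expr1 unitrM => /andP [].
rewrite det_ublock det_scalar expr1 legendreM.
rewrite /QS (@sum_rV_split _ F 1 k).
set a := H 0 0.
rewrite (eq_bigr (fun u => psi (2^-1 * (u *m a%:M *m u^T) 0 0) * QS E)); last first.
  move=> u _; rewrite /QS mulr_sumr; apply: eq_bigr => w _.
  rewrite mul_row_block tr_row_mx mul_row_col !mulmx0 addr0 add0r mxD_entry.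
  by rewrite mulrDr psiD.
rewrite -mulr_suml IH // sum_rV1.
rewrite (eq_bigr (fun t => psi (2^-1 * (a * t ^+ 2)))); last first.
  move=> t _; congr (psi (2^-1 * _)).
  by rewrite !mxE big_ord1 !mxE big_ord1 !mxE eqxx mulr1n -mulrA mulrCA -expr2.
have ha : a != 0 by [].
rewrite (gauss1 _ ha) exprS.
by rewrite [legendre a * G1']mulrC -!mulrA; congr (_ * _); rewrite mulrCA.
Qed.
End Sq.
Section Geo.
Variable F : fieldType.
Variable n : nat.
Variable Om : 'M[F]_(n + n).
Notation V := 'rV[F]_(n + n).
Notation om := (omega Om).

Lemma omDl (u v w : V) : om (u + v) w = om u w + om v w.
Proof. by rewrite /omega !mulmxDl mxD_entry. Qed.
Lemma omDr (u v w : V) : om u (v + w) = om u v + om u w.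
Proof. by rewrite /omega linearD /= mulmxDr mxD_entry. Qed.
Lemma om0l (v : V) : om 0 v = 0.
Proof. by rewrite /omega !mul0mx mxE. Qed.
Lemma om0r (v : V) : om v 0 = 0.
Proof. by rewrite /omega trmx0 mulmx0 mxE. Qed.
Lemma omNl (u v : V) : om (- u) v = - om u v.
Proof. by apply/eqP; rewrite -addr_eq0 -omDl addNr om0l. Qed.
Lemma omNr (u v : V) : om u (- v) = - om u v.
Proof. by apply/eqP; rewrite -addr_eq0 -omDr addNr om0r. Qed.

Hypothesis alt : forall v : V, om v v = 0.

Lemma om_anti (u v : V) : om u v = - om v u.
Proof.
apply/eqP; rewrite -addr_eq0; have := alt (u + v).
by rewrite omDl !omDr !alt add0r addr0 => ->.
Qed.

Lemma Om_tr : Om^T = - Om.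
Proof.
apply/matrixP => i j; rewrite !mxE.
have := om_anti (delta_mx 0 i) (delta_mx 0 j); rewrite /omega !quad_entry => ->.
by rewrite opprK.
Qed.

Lemma lagP {N : 'M[F]_(n, n + n)} {m1 m2} {A : 'M_(m1, n + n)} {B : 'M_(m2, n + n)} :
  N *m Om *m N^T = 0 -> (A <= N)%MS -> (B <= N)%MS -> A *m Om *m B^T = 0.
Proof.
move=> lN /submxP [X ->] /submxP [Y ->].
by rewrite trmx_mul !mulmxA -(mulmxA X) -(mulmxA X) lN mulmx0 mul0mx.
Qed.

Lemma lag_om {N : 'M[F]_(n, n + n)} {u v : V} :
  N *m Om *m N^T = 0 -> (u <= N)%MS -> (v <= N)%MS -> om u v = 0.
Proof. by move=> lN uN vN; rewrite /omega (lagP lN uN vN) mxE. Qed.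

Lemma capP {A B : 'M[F]_(n, n + n)} {m} {v : 'M_(m, n + n)} :
  row_free A -> row_free B -> gen_pos A B -> (v <= A)%MS -> (v <= B)%MS -> v = 0.
Proof.
move=> fA fB gAB vA vB.
have r := mxrank_sum_cap A B.
rewrite (eqP gAB) mxrank1 (eqP fA) (eqP fB) -[X in _ = X]addn0 in r.
move/eqP: r; rewrite eqn_add2l mxrank_eq0 => /eqP c0.
by apply/eqP; rewrite -submx0 -c0 sub_capmx vA vB.
Qed.

Lemma submxB {m1 m2} {A B : 'M[F]_(m1, n + n)} {C : 'M_(m2, n + n)} :
  (A <= C)%MS -> (B <= C)%MS -> (A - B <= C)%MS.
Proof. by move=> AC BC; apply: addmx_sub => //; rewrite (eqmx_opp B). Qed.

End Geo.

Lemma ac6 (R : zmodType) (a b c d e f : R) :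
  a + b + c + d + (e + f) = a + (b + d + f) + (c + e).
Proof.
rewrite !addrA (addrAC (a + b + d) f c) (addrAC (a + b) d c).
by rewrite (addrAC (a + b + c + d) f e).
Qed.

Lemma hmulA (F : fieldType) n (Om : 'M[F]_(n + n)) x y z :
  hmul Om (hmul Om x y) z = hmul Om x (hmul Om y z).
Proof.
case: x => x1 x2; case: y => y1 y2; case: z => z1 z2; rewrite /hmul /=.
congr pair; first by rewrite addrA.
by rewrite omDl omDr !mulrDr ac6.
Qed.

Lemma key_pair (F : fieldType) n (Om : 'M[F]_(n + n)) (N : 'M_(n, n + n)) (m nn r : 'rV[F]_(n + n)) :
  (forall v, omega Om v v = 0) -> N *m Om *m N^T = 0 -> (r <= N)%MS -> (nn <= N)%MS ->
  hmul Om (m, 0) (nn, 0) = hmul Om (hmul Om (0, 2^-1 * omega Om r m) (m - r, 0)) (r + nn, 0).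
Proof.
move=> alt lN rN nN; rewrite /hmul /=.
congr pair; first by rewrite add0r addrA subrK.
rewrite om0l !add0r !addr0 mulr0 addr0 -mulrDr; congr (_ * _).
rewrite omDl omNl !omDr (alt r) (lag_om _ _ _ lN rN nN) (om_anti _ _ _ alt r m).
by rewrite addr0 subr0 addKr.
Qed.

Lemma sum_sub (F : finFieldType) (R : nmodType) k m (M : 'M[F]_(k, m)) (g : 'rV[F]_m -> R) :
  row_free M -> \sum_(v : 'rV[F]_m | (v <= M)%MS) g v = \sum_(x : 'rV[F]_k) g (x *m M).
Proof.
move=> fM; rewrite (reindex (fun x : 'rV[F]_k => x *m M)) /=.
  by apply: eq_bigl => x; rewrite submxMl.
exists (fun v => v *m pinvmx M) => [x _ | v vM] /=.
  by apply: (row_free_inj fM); rewrite mulmxKpV // submxMl.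
by rewrite mulmxKpV.
Qed.

Lemma sgnk2 (F : fieldType) k (x : F) : sgnk F k * (sgnk F k * x) = x.
Proof.
by rewrite /sgnk mulrA -exprD addnn -mul2n exprM sqrrN !expr1n mul1r.
Qed.

Theorem mainTheorem2 (F : finFieldType) (n : nat) (Om : 'M[F]_(n + n))
  (psi : F -> algC) (N M L : 'M[F]_(n, n + n))
  (rL : 'rV[F]_(n + n) -> 'rV[F]_(n + n)) :
  ~~ (2 \in [pchar F]) ->
  symplectic_form Om ->
  nontrivial_char psi ->
  olag Om N -> olag Om M -> olag Om L ->
  gen_pos N M -> gen_pos M L -> gen_pos N L ->
  (forall m, (m <= M)%MS -> (rL m <= N)%MS /\ (rL m - m <= L)%MS) ->
  let C := \sum_(m : 'rV[F]_(n + n) | (m <= M)%MS) psi (2^-1 * omega Om (rL m) m) in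
  (forall f, inH Om psi L f ->
     forall h, Fop Om N (Fop Om M f) h = C * Fop Om N f h)
  /\ C = G1 psi ^+ n *
         legendre (sgnk F n * omega_wedge Om (\matrix_(i < n) rL (row i M)) M).
Proof.
move=> hc [alt dOm] [psi0 [psiD psiN]] [fN lN] [fM lM] [fL lL] gNM gML gNL hr C.
have h2 : (2:F) != 0 by move: hc; rewrite inE /=.
split.
  move=> f fH h.
  rewrite /Fop /C exchange_big mulr_suml; apply: eq_bigr => m mM.
  have [rN rL'] := hr m mM.
  have lL' : (m - rL m <= L)%MS by rewrite -opprB (eqmx_opp (rL m - m)).
  rewrite mulr_sumr [RHS](reindex_inj (addrI (rL m))) /=.
  rewrite [RHS](eq_bigl (fun nn => (nn <= N)%MS)); last first.
    move=> j; apply/idP/idP => [hj | hj]; last exact: addmx_sub.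
    by rewrite -(addKr (rL m) j); apply: addmx_sub => //; rewrite (eqmx_opp (rL m)).
  apply: eq_bigr => nn nN.
  by rewrite -hmulA (@key_pair _ _ _ _ m nn (rL m) alt lN rN nN) hmulA fH.
set R := \matrix_(i < n) rL (row i M).
have RN : (R <= N)%MS.
  by apply/row_subP => i; rewrite rowK; exact: (hr _ (row_sub i M)).1.
have RML : (R - M <= L)%MS.
  by apply/row_subP => i; rewrite linearB /= rowK; exact: (hr _ (row_sub i M)).2.
have rx : forall x : 'rV[F]_n, rL (x *m M) = x *m R.
  move=> x; have [h1 h3] := hr _ (submxMl x M).
  apply/eqP; rewrite -subr_eq0; apply/eqP; apply: (capP _ _ fN fL gNL).
    by apply: submxB h1 _; exact: submx_trans (submxMl x R) RN.
  have -> : rL (x *m M) - x *m R = (rL (x *m M) - x *m M) - x *m (R - M).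
    by rewrite mulmxBr opprB addrA subrK.
  by apply: submxB h3 _; exact: submx_trans (submxMl _ _) RML.
set G := R *m Om *m M^T.
have eC : C = QS F psi G.
  rewrite /C /QS (sum_sub _ _ _ _ _ (fun v => psi (2^-1 * omega Om (rL v) v)) fM); apply: eq_bigr => x _.
  by rewrite rx /omega /G trmx_mul !mulmxA.
have sG : G^T = G.
  have RR : R *m Om *m R^T = 0 := lagP _ _ _ lN RN RN.
  have LL : (R - M) *m Om *m (R - M)^T = 0 := lagP _ _ _ lL RML RML.
  rewrite linearB /= !mulmxBl !mulmxBr RR lM sub0r subr0 -/G in LL.
  move/eqP: LL; rewrite -opprD oppr_eq0 addr_eq0 => /eqP eG.
  rewrite {2}eG /G trmx_mul trmx_mul trmxK (Om_tr _ _ _ alt).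
  by rewrite mulNmx mulmxN mulmxA.
have uOm : Om \in unitmx by rewrite unitmxE unitfE.
have uG : G \in unitmx.
  rewrite -row_free_unit; apply: inj_row_free => v vG.
  have wN : (v *m R <= N)%MS := submx_trans (submxMl v R) RN.
  have wM : v *m R *m Om *m M^T = 0 by rewrite -vG /G !mulmxA.
  have wy : forall y : 'rV[F]_(n + n), v *m R *m Om *m y^T = 0.
    move=> y; have : (y <= (N + M)%MS)%MS by rewrite (eqP gNM) submx1.
    case/sub_addsmxP => [[u1 u2] /= ->].
    rewrite linearD /= !trmx_mul mulmxDr !mulmxA (lagP _ _ _ lN wN (submx_refl N)) wM.
    by rewrite !mul0mx addr0.
  have wO : v *m R *m Om = 0.
    apply/rowP => j; have := wy (delta_mx 0 j); rewrite trmx_delta -colE.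
    by move/matrixP => /(_ 0 0); rewrite !mxE.
  have w0 : v *m R = 0 by rewrite -[v *m R](mulmxK uOm) wO mul0mx.
  have vML : (v *m M <= L)%MS.
    have -> : v *m M = v *m R - v *m (R - M) by rewrite mulmxBr opprB addrC subrK.
    apply: submxB; first by rewrite w0 sub0mx.
    exact: submx_trans (submxMl _ _) RML.
  have vM0 : v *m M = 0 := capP _ _ fM fL gML (submxMl v M) vML.
  by apply/eqP; rewrite -(mulmx_free_eq0 _ fM) vM0.
rewrite eC (QS_main _ h2 _ psiD psiN psi0 _ _ sG uG) /omega_wedge -/R -/G sgnk2.
by [].
Qed.
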